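(* Let $p$ be a prime and $a_p(n)=\big[\frac{n}{p-1}\big]+v_p\big(\big[\frac{n}{p-1}\big]!\big)$ for integers $n\ge0$. Then $a_p(n)\geq a_p(k)+a_p(l)$ whenever $n\geq k+l$ (with $k,l\ge0$), and $a_p(m+n)\geq a_p(m+1)+v_p(n!)$ for all integers $m\ge 0$, $n\ge1$.
   Context: $[\alpha]$ denotes the integer part of $\alpha$ and $v_p$ the $p$-adic valuation. *)

(* Defs.v *)
From mathcomp Require Import all_boot.
Set Implicit Arguments. Unset Strict Implicit. Unset Printing Implicit Defensive.

Definition a_p (p n : nat) : nat := n %/ (p.-1) + logn p ((n %/ p.-1)`!).

(* Main.v *)
Require Import Defs.
From mathcomp Require Import all_boot.
From mathcomp Require Import zify.

Lemma fact_sup p k l : prime p -> logn p k`! + logn p l`! <= logn p (k + l)`!.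
Proof.
move=> hp.
have := bin_fact (leq_addr l k).
rewrite addKn => <-.
rewrite lognM ?bin_gt0 ?leq_addr // ?muln_gt0 ?fact_gt0 //.
rewrite lognM ?fact_gt0 //. lia.
Qed.

Lemma fact_mono p m n : prime p -> m <= n -> logn p m`! <= logn p n`!.
Proof.
move=> hp hmn. have := @fact_sup p m (n - m) hp. rewrite subnKC //. lia.
Qed.

Lemma div_sup q k l : k %/ q + l %/ q <= (k + l) %/ q.
Proof.
case: q => [|q]; first by rewrite !divn0.
rewrite (divnD _ _ (ltn0Sn q)). lia.
Qed.

Lemma logn_factS p n : prime p -> logn p (n.+1)`! = logn p n`! + logn p n.+1.
Proof. move=> hp; rewrite factS lognM ?fact_gt0 //; lia. Qed.

Lemma fact_step p n : prime p -> logn p n`! = n %/ p + logn p (n %/ p)`!.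
Proof.
move=> hp; have p0 := prime_gt0 hp.
elim: n => [|n IH]; first by rewrite div0n.
rewrite logn_factS // IH divnS //.
case: (boolP (p %| n.+1)) => hd /=.
  rewrite (lognE p n.+1) hp hd /=.
  rewrite add1n logn_factS //.
  have e : n.+1 %/ p = (n %/ p).+1 by rewrite divnS // hd.
  rewrite e; lia.
rewrite (lognE p n.+1) hp (negbTE hd) !andbF !add0n. lia.
Qed.

Lemma fact_bound p n : prime p -> 0 < n -> p.-1 * logn p n`! < n.
Proof.
move=> hp; have p1 := prime_gt1 hp.
elim/ltn_ind: n => n IH n0.
rewrite fact_step //.
case c0: (n %/ p) => [|c].
  by rewrite logn_fact //= big_geq // muln0.
have hc : c.+1 < n.
  rewrite -c0 ltn_Pdiv //.
have := IH _ hc (ltn0Sn c).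
have := leq_trunc_div n p. rewrite c0.
move=> h1 h2.
rewrite mulnDr.
have : p.-1 * c.+1 + c.+1 = c.+1 * p by destruct p; [done| simpl; lia].
lia.
Qed.

Theorem mainTheorem5 (p : nat) (hp : prime p) :
  (forall n k l : nat, k + l <= n -> a_p p k + a_p p l <= a_p p n) /\
  (forall m n : nat, 1 <= n -> a_p p (m + 1) + logn p (n`!) <= a_p p (m + n)).
Proof.
have p1 := prime_gt1 hp.
split.
  move=> n k l hkl; rewrite /a_p.
  set K := k %/ _; set L := l %/ _; set N := n %/ _.
  have h1 : K + L <= N.
    apply: leq_trans (div_sup _ _ _) _; exact: leq_div2r.
  have := @fact_sup p K L hp. have := @fact_mono p _ _ hp h1. lia.
move=> m n hn; rewrite /a_p.
have hb := @fact_bound p n hp hn.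
have hv : logn p n`! <= (n.-1) %/ p.-1.
  rewrite leq_divRL; last by case: p p1 hp hb => [|[|]].
  rewrite mulnC; lia.
have h1 : (m + 1) %/ p.-1 + logn p n`! <= (m + n) %/ p.-1.
  apply: leq_trans (_ : (m+1) %/ p.-1 + n.-1 %/ p.-1 <= _).
    lia.
  have -> : m + n = (m + 1) + n.-1 by lia.
  exact: div_sup.
have h2 := @fact_mono p _ _ hp (leq_trans (leq_addr _ _) h1).
lia.
Qed.
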